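(* Let $W$ be a BISO channel with $\eta=\eta_{KL}(W)$ and capacity $C(W)$. Then $$C_s\big(\mathrm{BEC}(1-\eta),W\big)=\eta-C(W),\qquad C_s\Big(W,\mathrm{BSC}\big(\tfrac{1-\sqrt\eta}{2}\big)\Big)=C(W)-1+h_2\Big(\tfrac{1-\sqrt\eta}{2}\Big).$$
   Context: A binary-input symmetric-output (BISO) channel is a channel $P_{Y|X}$ with input alphabet $\{0,1\}$ and finite output alphabet $\mathcal Y=\{0,\pm1,\dots,\pm l\}$ for some integer $l\ge 1$ (some transition probabilities may be zero), such that $P_{Y|X}(y|0)=P_{Y|X}(-y|1)$ for all $y$. $\mathrm{BSC}(p)$: binary symmetric channel with crossover probability $p$; $\mathrm{BEC}(\varepsilon)$: binary erasure channel with erasure probability $\varepsilon$. All logarithms are base 2; $h_2(p)=-p\log_2p-(1-p)\log_2(1-p)$. Capacity $C(P)=\sup_{P_X}I(X:Y)$. $\eta_{KL}(P)=\sup_{P_X,Q_X}\frac{D(P\circ P_X\|P\circ Q_X)}{D(P_X\|Q_X)}$ (over inputs with $0<D(P_X\|Q_X)<\infty$). For a wiretap setting with main channel $A=P_{Y|X}$ and eavesdropper channel $B=P_{Z|X}$ (same binary input), the secrecy capacity is $C_s(A,B)=\max_{P_X}\big(I(X:Y)-I(X:Z)\big)$. *)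

(* Defs.v *)
From HB Require Import structures.
From mathcomp Require Import all_boot all_order all_algebra.
From mathcomp Require Import all_classical all_reals all_analysis.
Set Implicit Arguments. Unset Strict Implicit. Unset Printing Implicit Defensive.
Import Order.TTheory GRing.Theory Num.Theory.
Local Open Scope classical_set_scope.
Local Open Scope ring_scope.

Section Info.
Variable R : realType.

Definition log2 (x : R) : R := ln x / ln 2.

Definition plogq (a b : R) : R := if a == 0 then 0 else a * log2 (a / b).

Definition is_distr (T : finType) (P : T -> R) : Prop :=
  (forall t, 0 <= P t) /\ \sum_(t : T) P t = 1.

Definition is_channel (Y : finType) (W : bool -> Y -> R) : Prop :=
  forall x, is_distr (W x).

(* KL divergence (real-valued; used only when supp P ⊆ supp Q) *)
Definition KL (T : finType) (P Q : T -> R) : R := \sum_(t : T) plogq (P t) (Q t).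

(* absolute continuity P << Q, i.e. D(P||Q) < oo *)
Definition abs_cont (T : finType) (P Q : T -> R) : Prop :=
  forall t, Q t = 0 -> P t = 0.

Definition outd (Y : finType) (W : bool -> Y -> R) (P : bool -> R) : Y -> R :=
  fun y => \sum_(x : bool) P x * W x y.

Definition MI (Y : finType) (P : bool -> R) (W : bool -> Y -> R) : R :=
  \sum_(x : bool) \sum_(y : Y) plogq (P x * W x y) (P x * outd W P y).

Definition capacity (Y : finType) (W : bool -> Y -> R) : R :=
  sup [set MI P W | P in [set P : bool -> R | is_distr P]].

Definition etaKL (Y : finType) (W : bool -> Y -> R) : R :=
  sup [set r : R | exists P Q : bool -> R,
        [/\ is_distr P, is_distr Q, abs_cont P Q, 0 < KL P Q &
            r = KL (outd W P) (outd W Q) / KL P Q]].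

Definition secrecy_capacity (Y Z : finType) (A : bool -> Y -> R) (B : bool -> Z -> R) : R :=
  sup [set MI P A - MI P B | P in [set P : bool -> R | is_distr P]].

Definition h2 (p : R) : R := - (plogq p 1) - plogq (1 - p) 1.

(* BISO channel: output alphabet {-l..l} encoded as 'I_(2l+1), index i <-> y = i - l;
   rev_ord i encodes -y. *)
Definition is_BISO (l : nat) (W : bool -> 'I_(2 * l + 1) -> R) : Prop :=
  is_channel W /\ forall y, W false y = W true (rev_ord y).

Definition BSC (p : R) : bool -> bool -> R :=
  fun x y => if x == y then 1 - p else p.

(* BEC(e): output option bool, None = erasure *)
Definition BEC (e : R) : bool -> option bool -> R :=
  fun x y => match y with None => e | Some b => if b == x then 1 - e else 0 end.

End Info.

(* Main.v *)
Require Import Defs.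
From HB Require Import structures.
From mathcomp Require Import all_boot all_order all_algebra.
From mathcomp Require Import all_classical all_reals all_analysis.
From mathcomp Require Import ring lra.
Import Order.TTheory GRing.Theory Num.Theory numFieldNormedType.Exports.
Set Implicit Arguments. Unset Strict Implicit. Unset Printing Implicit Defensive.
Local Open Scope classical_set_scope.
Local Open Scope ring_scope.
Section C.
Variable R : realType.

Lemma xlnx_bound (y : R) : 0 < y -> y <= 1 -> `|y * ln y| <= 2 * Num.sqrt y.
Proof.
move=> y0 y1.
have sy0 : 0 < Num.sqrt y by rewrite sqrtr_gt0.
have hy : y = Num.sqrt y * Num.sqrt y by rewrite -expr2 sqr_sqrtr // ltW.
have lny : ln y = 2 * ln (Num.sqrt y).
  by rewrite {1}hy lnM ?posrE //; lra.
have lnle : ln y <= 0 by apply: ln_le0.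
rewrite ler0_norm; last by rewrite mulr_ge0_le0 // ltW.
have h1 : - ln (Num.sqrt y) <= (Num.sqrt y)^-1.
  rewrite -lnV ?posrE //; apply: ltW; apply: ln_sublinear; rewrite invr_gt0 //.
rewrite lny.
have -> : - (y * (2 * ln (Num.sqrt y))) = 2 * (y * - ln (Num.sqrt y)) by ring.
rewrite ler_pM2l //.
have : y * - ln (Num.sqrt y) <= y * (Num.sqrt y)^-1 by rewrite ler_pM2l.
move/le_trans; apply.
by rewrite {1}hy mulrK // unitfE gt_eqF.
Qed.

Lemma xlnx_cont : continuous (fun x : R => x * ln x).
Proof.
move=> x; case: (ltgtP x 0) => [x0|x0|->].
- apply/cvgrPdist_lt => e e0; near=> y.
  have y0 : y < 0 by near: y; exact: lt_nbhsl.
  by rewrite !ln0 ?ltW // !mulr0 subrr normr0.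
- apply: continuousM; first exact: cvg_id.
  exact: continuous_ln.
- apply/cvgrPdist_lt => e e0; near=> y.
  rewrite ln0 // mulr0 sub0r normrN.
  case: (leP y 0) => y0; first by rewrite ln0 // mulr0 normr0.
  have hy : y < Num.min 1 ((e / 2) ^+ 2).
    by near: y; apply: lt_nbhsl; rewrite lt_min ltr01 exprn_gt0 // divr_gt0.
  rewrite lt_min in hy; case/andP: hy => hy1 hy2.
  have := @xlnx_bound y y0 (ltW hy1); move/le_lt_trans; apply.
  rewrite -ltr_pdivlMl // mulrC.
  have : Num.sqrt y < Num.sqrt ((e / 2) ^+ 2) by rewrite ltr_sqrt // exprn_gt0 // divr_gt0.
  by rewrite sqrtr_sqr ger0_norm ?divr_ge0 ?ltW // mulrC.
Unshelve. all: by end_near.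
Qed.
Lemma is_derive_lin (a c z : R) : is_derive z 1 (fun x => a + c * x) c.
Proof.
have H := is_deriveD (is_derive_cst a z 1) (is_deriveZ c (is_derive_id z 1)).
rewrite add0r /= in H.
have -> : (fun x => a + c * x) = (cst a + c *: id) by apply/funext.
by rewrite -[X in is_derive _ _ _ X]mulr1.
Qed.

Lemma is_derive_aln (a b c z : R) : (a = 0 \/ 0 < b + c * z) ->
  is_derive z 1 (fun x => a * ln (b + c * x)) (a * c / (b + c * z)).
Proof.
case=> [->|hz].
  have -> : (fun x => 0 * ln (b + c * x)) = cst 0 by apply/funext => x; rewrite mul0r.
  by rewrite !mul0r; exact: is_derive_cst.
have H1 := @is_derive1_comp R (@ln R) (fun x => b + c * x) z _ _ (is_derive1_ln hz) (is_derive_lin b c z).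
have H2 := is_deriveZ a H1.
have -> : (fun x => a * ln (b + c * x)) = a *: (@ln R \o (fun x => b + c * x)) by apply/funext.
by rewrite mulrAC -mulrA.
Qed.
Lemma mono_deriv (f df : R -> R) (a b : R) : a <= b ->
  (forall x, a < x < b -> is_derive x 1 f (df x)) ->
  (forall x, a < x < b -> 0 <= df x) ->
  {within `[a, b], continuous f} -> f a <= f b.
Proof.
rewrite le_eqVlt => /predU1P[->//|ab] hd hp hc.
have hd' : forall x, x \in `]a, b[ -> is_derive x 1 f (df x).
  by move=> x; rewrite in_itv /= => /hd.
have [c cab E] := MVT ab hd' hc.
rewrite -subr_ge0 E mulr_ge0 //; last by rewrite subr_ge0 ltW.
by apply: hp; rewrite in_itv /= in cab.
Qed.

Lemma cont_of_der (f df : R -> R) (a b : R) :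
  (forall x, a <= x <= b -> is_derive x 1 f (df x)) -> {within `[a, b], continuous f}.
Proof.
move=> hd; apply: derivable_within_continuous => x; rewrite in_itv /= => /hd H.
exact: ex_derive.
Qed.

Lemma is_deriveD' (f g : R -> R) (z df dg : R) : is_derive z 1 f df -> is_derive z 1 g dg ->
  is_derive z 1 (fun x => f x + g x) (df + dg).
Proof. by move=> H1 H2; have := is_deriveD H1 H2. Qed.

Lemma ln2_gt0 : 0 < ln (2 : R).
Proof. by apply: ln_gt0; rewrite ltr1n. Qed.

Definition dbin (x z : R) := plogq x z + plogq (1 - x) (1 - z).

Lemma plogq1 (a : R) : plogq a 1 = a * ln a / ln 2.
Proof.
rewrite /plogq /log2 divr1; case: eqP => [->|_]; first by rewrite !mul0r.
by rewrite mulrA.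
Qed.

Lemma plogq_split (a b : R) : 0 <= a -> (a = 0 \/ 0 < b) ->
  plogq a b = plogq a 1 - a * ln b / ln 2.
Proof.
move=> a0 h; rewrite plogq1 /plogq /log2.
case: eqP => [->|/eqP an0]; first by rewrite !mul0r subrr.
have ap : 0 < a by rewrite lt_def an0.
case: h => [/eqP|bp]; first by rewrite (negbTE an0).
rewrite ln_div ?posrE //; field; exact: lt0r_neq0 ln2_gt0.
Qed.

Lemma plogq_xx (a : R) : plogq a a = 0.
Proof.
rewrite /plogq; case: eqP => // /eqP a0.
by rewrite divff // /log2 ln1 mul0r mulr0.
Qed.

Lemma dbin_xx (x : R) : dbin x x = 0.
Proof. by rewrite /dbin !plogq_xx addr0. Qed.

Lemma dbin_rep (x z : R) : 0 <= x <= 1 -> (x = 0 \/ 0 < z) -> (1 - x = 0 \/ 0 < 1 - z) ->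
  dbin x z = ((x * ln x + (1 - x) * ln (1 - x)) - (x * ln z + (1 - x) * ln (1 - z))) / ln 2.
Proof.
case/andP=> x0 x1 h1 h2.
rewrite /dbin (@plogq_split x z x0 h1) (@plogq_split (1 - x) (1 - z) _ h2) ?subr_ge0 // !plogq1.
by rewrite !mulrBl !mulrDl; lra.
Qed.

Definition rr (c x : R) := (1 - c) / 2 + c * x.

Lemma rr_in (c x : R) : -1 <= c <= 1 -> 0 <= x <= 1 -> 0 <= rr c x <= 1.
Proof. rewrite /rr => /andP[c1 c2] /andP[x1 x2]; apply/andP; split; nra. Qed.

Lemma rr_in_oo (c x : R) : -1 <= c <= 1 -> 0 < x < 1 -> 0 < rr c x < 1.
Proof. rewrite /rr => /andP[c1 c2] /andP[x1 x2]; apply/andP; split; nra. Qed.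
Lemma sdpi_bsc (c p q : R) : -1 <= c <= 1 -> 0 <= p <= 1 -> 0 <= q <= 1 ->
  (0 < q < 1 \/ p = q) -> dbin (rr c p) (rr c q) <= c ^+ 2 * dbin p q.
Proof.
move=> hc hp hq [hq'|<-]; last by rewrite !dbin_xx mulr0.
have hrp := rr_in hc hp.
have hrq := rr_in_oo hc hq'.
set rp := rr c p in hrp *.
case/andP: hp => p0 p1; case/andP: hq' => q0 q1.
case/andP: hrp => rp0 rp1; case/andP: hrq => rq0 rq1.
have rpE : rp = (1 - c) / 2 + c * p by [].
set H := fun z => (-(c^+2 * p)) * ln (0 + 1 * z) + (-(c^+2 * (1 - p))) * ln (1 + (-1) * z)
   + (rp * ln ((1 - c) / 2 + c * z) + (1 - rp) * ln ((1 + c) / 2 + (- c) * z)).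
set dH := fun z => (-(c^+2 * p)) * 1 / (0 + 1 * z) + (-(c^+2 * (1 - p))) * (-1) / (1 + (-1) * z)
   + (rp * c / ((1 - c) / 2 + c * z) + (1 - rp) * (- c) / ((1 + c) / 2 + (- c) * z)).
have derH : forall z, (z = p \/ 0 < z < 1) -> is_derive z 1 H (dH z).
  move=> z hz.
  have hz1 : -(c^+2 * p) = 0 \/ 0 < 0 + 1 * z.
    case: hz => [->|/andP[z0 _]]; last by right; lra.
    by case: (ltgtP p 0) => [|p0'|->]; [lra| right; lra | left; lra].
  have hz2 : -(c^+2 * (1 - p)) = 0 \/ 0 < 1 + (-1) * z.
    case: hz => [->|/andP[_ z1]]; last by right; lra.
    by case: (ltgtP p 1) => [p1'|| ->]; [right; lra | lra | left; lra].
  have hz3 : rp = 0 \/ 0 < (1 - c) / 2 + c * z.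
    case: hz => [->|hz]; last by right; have := rr_in_oo hc hz; rewrite /rr => /andP[].
    by case: (ltgtP rp 0) => [|rp0'|->]; [lra| right; lra | left].
  have hz4 : 1 - rp = 0 \/ 0 < (1 + c) / 2 + (- c) * z.
    case: hz => [->|hz]; last first.
      right; have := rr_in_oo hc hz; rewrite /rr => /andP[_ ?]; lra.
    by case: (ltgtP rp 1) => [rp1'||->]; [right; lra | lra | left; lra].
  apply: is_deriveD'; apply: is_deriveD'; exact: is_derive_aln.
have dHE : forall z, 0 < z < 1 -> dH z = c^+2 * (z - p) * ((1 - c^+2) * (z - 1/2)^+2) /
    (z * (1 - z) * (rr c z * (1 - rr c z))).
  move=> z hz; have := rr_in_oo hc hz; rewrite /rr => /andP[r0 r1].
  case/andP: hz => z0 z1.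
  rewrite /dH rpE; field.
  by apply/and4P; split; apply: lt0r_neq0; lra.
have c2 : 0 <= 1 - c^+2 by case/andP: hc => ? ?; nra.
have den : forall z, 0 < z < 1 -> 0 < z * (1 - z) * (rr c z * (1 - rr c z)).
  move=> z hz; have := rr_in_oo hc hz; case/andP: hz => ? ? /andP[? ?].
  by rewrite !mulr_gt0 // subr_gt0.
have Hval : forall z, H z = -(c^+2 * p) * ln z - c^+2 * (1 - p) * ln (1 - z)
    + rp * ln (rr c z) + (1 - rp) * ln (1 - rr c z).
  move=> z; rewrite /H add0r mul1r mulN1r.
  have -> : (1 + c) / 2 + - c * z = 1 - rr c z by rewrite /rr; field.
  rewrite -/(rr c z); ring.
have key : H p <= H q.
  case: (leP p q) => pq.
    apply: (@mono_deriv H dH) => //.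
    - move=> x /andP[px xq]; apply: derH; right; apply/andP; split; lra.
    - move=> x /andP[px xq]; rewrite dHE; last by apply/andP; split; lra.
      apply: divr_ge0; last by apply/ltW/den/andP; split; lra.
      apply: mulr_ge0; [apply: mulr_ge0; [exact: sqr_ge0 | lra] | apply: mulr_ge0 => //; exact: sqr_ge0].
    - apply: (@cont_of_der H dH) => x /andP[px xq]; apply: derH.
      case: (ltgtP x p) => [|xp|->]; [lra| right; apply/andP; split; lra| by left].
  have M := @mono_deriv (fun z => - H z) (fun z => - dH z) q p (ltW pq).
  suff h : (fun z => - H z) q <= (fun z => - H z) p by rewrite -lerN2; exact: h.
  apply: M.
  - move=> x /andP[px xq]; apply: is_deriveN; apply: derH; right; apply/andP; split; lra.
  - move=> x /andP[px xq]; rewrite dHE; last by apply/andP; split; lra.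
    have hd : 0 < x < 1 by apply/andP; split; lra.
    rewrite -mulNr; apply: divr_ge0; last exact/ltW/den.
    have -> : - (c^+2 * (x - p) * ((1 - c^+2) * (x - 1/2)^+2)) = c^+2 * (p - x) * ((1 - c^+2) * (x - 1/2)^+2) by ring.
    apply: mulr_ge0; [apply: mulr_ge0; [exact: sqr_ge0 | lra] | apply: mulr_ge0 => //; exact: sqr_ge0].
  - apply: (@cont_of_der (fun z => - H z) (fun z => - dH z)) => x /andP[px xq].
    apply: is_deriveN; apply: derH.
    case: (ltgtP x p) => [xp||->]; [right; apply/andP; split; lra| lra | by left].
rewrite (@dbin_rep rp) ?(@dbin_rep p); first last.
- by right; lra.
- by right.
- by apply/andP.
- by right; lra.
- by right.
- by apply/andP.
rewrite mulrA ler_pM2r ?invr_gt0 ?ln2_gt0 //.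
rewrite -subr_ge0.
have -> : c ^+ 2 * (p * ln p + (1 - p) * ln (1 - p) - (p * ln q + (1 - p) * ln (1 - q))) -
   (rp * ln rp + (1 - rp) * ln (1 - rp) - (rp * ln (rr c q) + (1 - rp) * ln (1 - rr c q)))
   = H q - H p by rewrite !Hval; ring.
by rewrite subr_ge0.
Qed.
Lemma cont_sum n (h : 'I_n -> R -> R) (x : R) :
  (forall i, {for x, continuous (h i)}) -> {for x, continuous (fun y => \sum_(i < n) h i y)}.
Proof.
move=> hc; rewrite -(fct_sumE _ _ h).
elim/big_ind: _ => //.
- exact: cst_continuous.
- by move=> f g cf cg; apply: continuousD.
Qed.

Lemma is_derive_sum' n (h : 'I_n -> R -> R) (dh : 'I_n -> R) (x : R) :
  (forall i, is_derive x 1 (h i) (dh i)) -> is_derive x 1 (fun y => \sum_(i < n) h i y) (\sum_(i < n) dh i).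
Proof. by move=> hd; rewrite -(fct_sumE _ _ h); apply: is_derive_sum. Qed.

Lemma contD' (f g : R -> R) (x : R) : {for x, continuous f} -> {for x, continuous g} ->
  {for x, continuous (fun y => f y + g y)}.
Proof. by move=> hf hg; apply: continuousD. Qed.

Lemma contM' (f g : R -> R) (x : R) : {for x, continuous f} -> {for x, continuous g} ->
  {for x, continuous (fun y => f y * g y)}.
Proof. by move=> hf hg; apply: continuousM. Qed.

Lemma cont_lin (a c x : R) : {for x, continuous (fun y => a + c * y)}.
Proof.
apply: (@contD' (fun _ => a) (fun y => c * y)); first exact: cst_continuous.
by apply: (@contM' (fun _ => c) id); [exact: cst_continuous | exact: cvg_id].
Qed.

Definition GG (x : R) := (1 + x) * ln (1 + x) + (1 - x) * ln (1 - x).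

Lemma GG_cont (c : R) : continuous (fun x => GG (c * x)).
Proof.
move=> x; rewrite /GG.
apply: (@contD' (fun x => (1 + c * x) * ln (1 + c * x)) (fun x => (1 - c * x) * ln (1 - c * x))).
- apply: (@continuous_comp _ _ _ (fun x => 1 + c * x) (fun y => y * ln y)); last exact: xlnx_cont.
  exact: cont_lin.
- have -> : (fun x => (1 - c * x) * ln (1 - c * x)) = (fun y => y * ln y) \o (fun x => 1 + (- c) * x).
    by apply/funext => y /=; rewrite mulNr.
  apply: continuous_comp; last exact: xlnx_cont.
  exact: cont_lin.
Qed.
Lemma is_deriveM' (f g : R -> R) (z df dg : R) : is_derive z 1 f df -> is_derive z 1 g dg ->
  is_derive z 1 (fun x => f x * g x) (f z * dg + g z * df).
Proof. by move=> H1 H2; have := is_deriveM H1 H2. Qed.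

Lemma is_derive_xlnlin (c y : R) : 0 < 1 + c * y ->
  is_derive y 1 (fun x => (1 + c * x) * ln (1 + c * x)) (c * ln (1 + c * y) + c).
Proof.
move=> hy.
have H1 := is_derive_lin 1 c y.
have H2 : is_derive y 1 (fun x => ln (1 + c * x)) (1 * c / (1 + c * y)).
  have := @is_derive_aln 1 1 c y (or_intror hy).
  by have -> : (fun x => 1 * ln (1 + c * x)) = (fun x => ln (1 + c * x)) by apply/funext => x; rewrite mul1r.
apply: (is_derive_eq (is_deriveM' H1 H2)).
by rewrite mul1r mulrCA divff ?mulr1 ?lt0r_neq0 // addrC mulrC.
Qed.

Lemma is_derive_GG (c y : R) : 0 < 1 + c * y -> 0 < 1 - c * y ->
  is_derive y 1 (fun x => GG (c * x)) ((c * ln (1 + c * y)) + (- c) * ln (1 + (- c) * y)).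
Proof.
move=> h1 h2.
have h2' : 0 < 1 + (- c) * y by rewrite mulNr.
have -> : (fun x => GG (c * x)) = (fun x => (1 + c * x) * ln (1 + c * x) + (1 + (- c) * x) * ln (1 + (- c) * x)).
  by apply/funext => x; rewrite /GG mulNr.
apply: (is_derive_eq (is_deriveD' (is_derive_xlnlin h1) (is_derive_xlnlin h2'))).
ring.
Qed.

Lemma tangent_f (u v x : R) : 0 <= u <= 1 -> 0 <= v <= 1 -> 0 <= x < 1 ->
  v / (1 - v * x^+2) + (u - v) / (1 - v * x^+2)^+2 <= u / (1 - u * x^+2).
Proof.
move=> /andP[u0 u1] /andP[v0 v1] /andP[x0 x1].
have hx : x^+2 < 1 by rewrite expr2; nra.
have a0 : 0 < 1 - u * x^+2 by nra.
have b0 : 0 < 1 - v * x^+2 by nra.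
rewrite -subr_ge0.
have -> : u / (1 - u * x^+2) - (v / (1 - v * x^+2) + (u - v) / (1 - v * x^+2)^+2)
   = (u - v)^+2 * x^+2 / ((1 - u * x^+2) * (1 - v * x^+2)^+2).
  by field; rewrite !lt0r_neq0.
apply: divr_ge0; first by apply: mulr_ge0; exact: sqr_ge0.
by apply/ltW/mulr_gt0 => //; exact: exprn_gt0.
Qed.
Lemma is_deriveZ' (f : R -> R) (k z df : R) : is_derive z 1 f df ->
  is_derive z 1 (fun x => k * f x) (k * df).
Proof. by move=> H; have := is_deriveZ k H. Qed.

Lemma is_deriveB' (f g : R -> R) (z df dg : R) : is_derive z 1 f df -> is_derive z 1 g dg ->
  is_derive z 1 (fun x => f x - g x) (df - dg).
Proof. by move=> H1 H2; have := is_deriveB H1 H2. Qed.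

Lemma contB' (f g : R -> R) (x : R) : {for x, continuous f} -> {for x, continuous g} ->
  {for x, continuous (fun y => f y - g y)}.
Proof. by move=> hf hg; apply: continuousB. Qed.

Lemma GG0 : GG 0 = 0.
Proof. by rewrite /GG addr0 subr0 ln1 mulr0 addr0. Qed.

Lemma jensen_G n (w c : 'I_n -> R) (s t : R) :
  (forall i, 0 <= w i) -> \sum_(i < n) w i = 1 -> (forall i, -1 <= c i <= 1) ->
  0 <= s <= 1 -> s ^+ 2 <= \sum_(i < n) w i * c i ^+ 2 -> 0 <= t <= 1 ->
  GG (s * t) <= \sum_(i < n) w i * GG (c i * t).
Proof.
move=> w0 w1 hc hs hK ht.
have pos : forall (a y : R), -1 <= a <= 1 -> 0 <= y < 1 -> 0 < 1 + a * y /\ 0 < 1 + (- a) * y.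
  by move=> a y /andP[? ?] /andP[? ?]; split; nra.
have hs' : -1 <= s <= 1 by case/andP: hs => ? ?; apply/andP; split; lra.
pose D1 := fun x => \sum_(i < n) ((w i * c i) * ln (1 + c i * x) + (-(w i * c i)) * ln (1 + (- c i) * x))
   + ((- s) * ln (1 + s * x) + s * ln (1 + (- s) * x)).
pose D2 := fun x => \sum_(i < n) ((w i * c i) * c i / (1 + c i * x) + (-(w i * c i)) * (- c i) / (1 + (- c i) * x))
   + ((- s) * s / (1 + s * x) + s * (- s) / (1 + (- s) * x)).
have dD1 : forall y : R, 0 <= y < 1 -> is_derive y 1 D1 (D2 y).
  move=> y hy; apply: is_deriveD'.
    apply: is_derive_sum' => i; have [p1 p2] := pos _ _ (hc i) hy.
    by apply: is_deriveD'; apply: is_derive_aln; right.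
  have [p1 p2] := pos _ _ hs' hy.
  by apply: is_deriveD'; apply: is_derive_aln; right.
have D10 : D1 0 = 0.
  rewrite /D1 big1 => [|i _]; first by rewrite !(mulr0, addr0, add0r, ln1).
  by rewrite !(mulr0, addr0, add0r, ln1).
have D2ge : forall y : R, 0 <= y < 1 -> 0 <= D2 y.
  move=> y hy; pose f := fun u => u / (1 - u * y ^+ 2).
  have E : D2 y = 2 * (\sum_(i < n) w i * f (c i ^+ 2) - f (s ^+ 2)).
    rewrite /D2 (eq_bigr (fun i => 2 * (w i * f (c i ^+ 2)))); last first.
      move=> i _; have [p1 p2] := pos _ _ (hc i) hy.
      have p3 : 0 < 1 - c i ^+ 2 * y ^+ 2.
        have -> : 1 - c i ^+ 2 * y ^+ 2 = (1 + c i * y) * (1 + (- c i) * y) by ring.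
        exact: mulr_gt0.
      rewrite /f; field; repeat (apply/andP; split); apply: lt0r_neq0; nra.
    have [p1 p2] := pos _ _ hs' hy.
    have p3 : 0 < 1 - s ^+ 2 * y ^+ 2.
      have -> : 1 - s ^+ 2 * y ^+ 2 = (1 + s * y) * (1 + (- s) * y) by ring.
      exact: mulr_gt0.
    have -> : (- s) * s / (1 + s * y) + s * (- s) / (1 + (- s) * y) = - (2 * f (s ^+ 2)).
      rewrite /f; field; repeat (apply/andP; split); apply: lt0r_neq0; nra.
    by rewrite -mulr_sumr; ring.
  rewrite E; apply: mulr_ge0 => //; rewrite subr_ge0.
  have hs2 : 0 <= s ^+ 2 <= 1 by case/andP: hs => ? ?; apply/andP; split; nra.
  set B := (1 - s ^+ 2 * y ^+ 2) ^+ 2.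
  have T : forall i, w i * (f (s ^+ 2) + (c i ^+ 2 - s ^+ 2) / B) <= w i * f (c i ^+ 2).
    move=> i; apply: ler_wpM2l => //; apply: tangent_f => //.
    by case/andP: (hc i) => ? ?; apply/andP; split; nra.
  apply: le_trans (ler_sum _ (fun i _ => T i)).
  have -> : \sum_(i < n) w i * (f (s ^+ 2) + (c i ^+ 2 - s ^+ 2) / B)
     = f (s ^+ 2) * \sum_(i < n) w i + ((\sum_(i < n) w i * c i ^+ 2) - s ^+ 2 * \sum_(i < n) w i) / B.
    rewrite !mulr_sumr -sumrB mulr_suml -big_split.
    by apply: eq_bigr => i _ /=; ring.
  rewrite w1 !mulr1 lerDl; apply: divr_ge0; first by rewrite subr_ge0.
  by rewrite /B sqr_ge0.
have A : forall x : R, 0 <= x < 1 -> 0 <= D1 x.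
  move=> x /andP[x0 x1]; rewrite -D10.
  apply: (@mono_deriv D1 D2) => //.
  - by move=> y /andP[y0 y1]; apply: dD1; apply/andP; split; lra.
  - by move=> y /andP[y0 y1]; apply: D2ge; apply/andP; split; lra.
  - by apply: (@cont_of_der D1 D2) => y /andP[y0 y1]; apply: dD1; apply/andP; split; lra.
pose D := fun x => \sum_(i < n) w i * GG (c i * x) - GG (s * x).
have dD : forall y : R, 0 <= y < 1 -> is_derive y 1 D (D1 y).
  move=> y hy.
  have H1 : is_derive y 1 (fun x => \sum_(i < n) w i * GG (c i * x))
     (\sum_(i < n) w i * (c i * ln (1 + c i * y) + (- c i) * ln (1 + (- c i) * y))).
    apply: is_derive_sum' => i; apply: is_deriveZ'.
    have [p1 p2] := pos _ _ (hc i) hy.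
    by apply: is_derive_GG => //; rewrite -mulNr.
  have H2 : is_derive y 1 (fun x => GG (s * x)) (s * ln (1 + s * y) + (- s) * ln (1 + (- s) * y)).
    have [p1 p2] := pos _ _ hs' hy.
    by apply: is_derive_GG => //; rewrite -mulNr.
  apply: (is_derive_eq (is_deriveB' H1 H2)).
  rewrite /D1; congr (_ + _); last by ring.
  by apply: eq_bigr => i _; ring.
have D0 : D 0 = 0.
  rewrite /D mulr0 GG0 subr0 big1 // => i _; by rewrite mulr0 GG0 mulr0.
suff : D 0 <= D t by rewrite D0 /D subr_ge0.
case/andP: ht => t0 t1.
apply: (@mono_deriv D D1) => //.
- by move=> y /andP[y0 y1]; apply: dD; apply/andP; split; lra.
- by move=> y /andP[y0 y1]; apply: A; apply/andP; split; lra.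
- apply: continuous_subspaceT => x.
  rewrite /D; apply: (@contB' (fun x => \sum_(i < n) w i * GG (c i * x)) (fun x => GG (s * x))); last exact: GG_cont.
  apply: cont_sum => i.
  by apply: (@contM' (fun _ => w i)); [exact: cst_continuous | exact: GG_cont].
Qed.
End C.

Section Info.
Variable R : realType.

Definition Hn (Y : finType) (q : Y -> R) := \sum_(y : Y) plogq (q y) 1.
Definition bd (p : R) : bool -> R := fun b => if b then p else 1 - p.

Lemma outdE (Y : finType) (V : bool -> Y -> R) (P : bool -> R) (y : Y) :
  outd V P y = P true * V true y + P false * V false y.
Proof. by rewrite /outd big_bool. Qed.

Lemma plogq0 (b : R) : plogq 0 b = 0.
Proof. by rewrite /plogq eqxx. Qed.

Lemma plogq_scale (m x z : R) : 0 <= m -> plogq (m * x) (m * z) = m * plogq x z.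
Proof.
rewrite le_eqVlt => /predU1P[<-|m0]; first by rewrite !mul0r plogq0.
rewrite /plogq mulf_eq0 (negbTE (lt0r_neq0 m0)) /=.
case: eqP => [_|_]; first by rewrite mulr0.
case: (eqVneq z 0) => [->|z0]; first by rewrite mulr0 !invr0 !mulr0 mulrA.
by rewrite -mulf_div divff ?mul1r ?lt0r_neq0 // mulrA.
Qed.

Lemma MI_term (a v o : R) : 0 <= a -> 0 <= v -> (a * v = 0 \/ 0 < o) ->
  plogq (a * v) (a * o) = a * plogq v 1 - a * v * ln o / ln 2.
Proof.
rewrite le_eqVlt => /predU1P[<-|a0] v0 h; first by rewrite !mul0r plogq0 subrr.
rewrite plogq_scale ?ltW // (@plogq_split R v o) //; first by ring.
case: h => [/eqP|]; last by right.
by rewrite mulf_eq0 (negbTE (lt0r_neq0 a0)) /= => /eqP; left.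
Qed.

Lemma MI_formula (Y : finType) (P : bool -> R) (V : bool -> Y -> R) :
  (forall x, 0 <= P x) -> (forall x y, 0 <= V x y) ->
  MI P V = \sum_(x : bool) P x * Hn (V x) - Hn (outd V P).
Proof.
move=> hP hV; rewrite /MI.
have E : forall x y, plogq (P x * V x y) (P x * outd V P y) =
    P x * plogq (V x y) 1 - P x * V x y * (ln (outd V P y) / ln 2).
  move=> x y; rewrite mulrA; apply: MI_term => //.
  case: (eqVneq (P x * V x y) 0) => h; [by left | right].
  have : 0 < P x * V x y by rewrite lt_def h mulr_ge0.
  have := mulr_ge0 (hP false) (hV false y); have := mulr_ge0 (hP true) (hV true y).
  by rewrite outdE; case: x h; lra.
rewrite (eq_bigr (fun x => \sum_(y : Y) (P x * plogq (V x y) 1 - P x * V x y * (ln (outd V P y) / ln 2)))); last first.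
  by move=> x _; apply: eq_bigr => y _; exact: E.
rewrite (eq_bigr (fun x => P x * Hn (V x) - \sum_(y : Y) P x * V x y * (ln (outd V P y) / ln 2))); last first.
  by move=> x _; rewrite sumrB /Hn mulr_sumr.
rewrite sumrB; congr (_ - _).
rewrite exchange_big /Hn; apply: eq_bigr => y _.
by rewrite -mulr_suml plogq1 mulrA.
Qed.
Lemma ln2_neq0 : ln (2 : R) != 0.
Proof. exact: lt0r_neq0 (ln2_gt0 R). Qed.

Lemma distr_sum (P : bool -> R) : is_distr P -> P true + P false = 1.
Proof. by case=> _; rewrite big_bool. Qed.

Lemma Hn_sym (Y : finType) (V : bool -> Y -> R) (sg : Y -> Y) :
  involutive sg -> (forall y, V false y = V true (sg y)) -> Hn (V false) = Hn (V true).
Proof.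
move=> inv hs; rewrite /Hn (reindex_inj (inv_inj inv)).
by apply: eq_bigr => y _; rewrite hs inv.
Qed.

Lemma MI_sym (Y : finType) (V : bool -> Y -> R) (sg : Y -> Y) (P : bool -> R) :
  involutive sg -> (forall y, V false y = V true (sg y)) -> (forall x y, 0 <= V x y) ->
  is_distr P -> MI P V = Hn (V true) - Hn (outd V P).
Proof.
move=> inv hs hV hP; rewrite MI_formula //; last by case: hP.
by rewrite big_bool /= (Hn_sym inv hs) -mulrDl distr_sum // mul1r.
Qed.

Definition unif : bool -> R := fun _ => 1 / 2.

Lemma is_distr_unif : is_distr unif.
Proof. by split => [t|]; rewrite /unif ?big_bool /=; lra. Qed.

Lemma KL_sym (Y : finType) (V : bool -> Y -> R) (sg : Y -> Y) (P : bool -> R) :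
  involutive sg -> (forall y, V false y = V true (sg y)) -> (forall x y, 0 <= V x y) ->
  is_distr P -> KL (outd V P) (outd V unif) = Hn (outd V P) - Hn (outd V unif).
Proof.
move=> inv hs hV hP.
have [hP0 hP1] := hP; have s1 := distr_sum hP.
set L := fun y => ln (outd V unif y) / ln 2.
have E : forall y, plogq (outd V P y) (outd V unif y) = plogq (outd V P y) 1 - outd V P y * L y.
  move=> y; rewrite /L mulrA; apply: plogq_split.
    by rewrite outdE; apply: addr_ge0; apply: mulr_ge0.
  have := hV true y; have := hV false y; have := hP0 true; have := hP0 false.
  rewrite !outdE /unif => h1 h2 h3 h4.
  case: (ltrP 0 (1 / 2 * V true y + 1 / 2 * V false y)) => h; [by right | left].
  have ht : V true y = 0 by lra.
  have hf : V false y = 0 by lra.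
  by rewrite ht hf !mulr0 addr0.
rewrite /KL (eq_bigr _ (fun y _ => E y)) sumrB; congr (_ - _).
have h1 : forall y, V true (sg y) = V false y by move=> y; rewrite hs.
have h2 : forall y, V false (sg y) = V true y by move=> y; rewrite hs inv.
have Lsym : forall y, L (sg y) = L y.
  by move=> y; rewrite /L !outdE /unif h1 h2; congr (ln _ / _); field.
have Psym : forall y, outd V P y + outd V P (sg y) = 2 * outd V unif y.
  move=> y; rewrite !outdE /unif h1 h2.
  have -> : P false = 1 - P true by lra.
  by field.
have E2 : \sum_(y : Y) outd V P y * L y = \sum_(y : Y) outd V P (sg y) * L y.
  by rewrite (reindex_inj (inv_inj inv)); apply: eq_bigr => y _; rewrite Lsym.
transitivity ((\sum_(y : Y) outd V P y * L y + \sum_(y : Y) outd V P (sg y) * L y) / 2).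
  by rewrite -E2; field.
rewrite -big_split.
rewrite mulr_suml.
rewrite /Hn; apply: eq_bigr => y _ /=.
by rewrite -mulrDl Psym plogq1 /L; field; exact: ln2_neq0.
Qed.

Lemma MI_unif_decomp (Y : finType) (V : bool -> Y -> R) (sg : Y -> Y) (P : bool -> R) :
  involutive sg -> (forall y, V false y = V true (sg y)) -> (forall x y, 0 <= V x y) ->
  is_distr P -> MI unif V = MI P V + KL (outd V P) (outd V unif).
Proof.
move=> inv hs hV hP.
rewrite (MI_sym inv hs hV hP) (MI_sym inv hs hV (@is_distr_unif)) (KL_sym inv hs hV hP).
ring.
Qed.
Lemma bdE (p : R) : bd p true = p /\ bd p false = 1 - p.
Proof. by []. Qed.

Lemma distr_bd (P : bool -> R) : is_distr P -> P = bd (P true).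
Proof.
move=> hP; have := distr_sum hP => h.
by apply/funext => -[]; rewrite /bd //; lra.
Qed.

Lemma bd_in (P : bool -> R) : is_distr P -> 0 <= P true <= 1.
Proof.
move=> hP; have := distr_sum hP; case: hP => h0 _ h.
have := h0 true; have := h0 false => ? ?; apply/andP; split; lra.
Qed.

Lemma is_distr_bd (p : R) : 0 <= p <= 1 -> is_distr (bd p).
Proof.
case/andP=> p0 p1; split => [[]|]; rewrite /bd ?big_bool /=; lra.
Qed.

Lemma KL_bd (p q : R) : KL (bd p) (bd q) = dbin p q.
Proof. by rewrite /KL big_bool /= /dbin. Qed.

Lemma term_decomp (a b p q : R) : 0 <= a -> 0 <= b ->
  plogq (p * b + (1 - p) * a) (q * b + (1 - q) * a) + plogq (p * a + (1 - p) * b) (q * a + (1 - q) * b)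
  = (a + b) * dbin (rr ((b - a) / (a + b)) p) (rr ((b - a) / (a + b)) q).
Proof.
move=> a0 b0.
case: (eqVneq (a + b) 0) => [m0|m0].
  have ha : a = 0 by lra.
  have hb : b = 0 by lra.
  by rewrite ha hb !mulr0 !addr0 plogq0 addr0 mul0r.
have mp : 0 < a + b by rewrite lt_def m0 addr_ge0.
have e1 : forall x, x * b + (1 - x) * a = (a + b) * rr ((b - a) / (a + b)) x.
  by move=> x; rewrite /rr; field.
have e2 : forall x, x * a + (1 - x) * b = (a + b) * (1 - rr ((b - a) / (a + b)) x).
  by move=> x; rewrite /rr; field.
by rewrite !e1 !e2 !plogq_scale ?ltW // -mulrDr.
Qed.
Lemma unif_bd : unif = bd (1 / 2).
Proof. by apply/funext => -[]; rewrite /unif /bd //; field. Qed.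

Lemma plogq_gibbs (a b : R) : 0 <= a -> 0 < b -> (a - b) / ln 2 <= plogq a b.
Proof.
rewrite le_eqVlt => /predU1P[<-|a0] b0.
  rewrite plogq0 sub0r mulNr oppr_le0 divr_ge0 // ?ltW //; exact: ln2_gt0.
rewrite /plogq (negbTE (lt0r_neq0 a0)) /log2 mulrA ler_pM2r ?invr_gt0 ?ln2_gt0 //.
have h : ln (b / a) <= b / a - 1.
  have e1 : 1 + (b / a - 1) = b / a by ring.
  have := @le_ln1Dx R (b / a - 1); rewrite e1; apply.
  have : 0 < b / a by rewrite divr_gt0.
  lra.
have e : ln (a / b) = - ln (b / a).
  by rewrite !ln_div ?posrE // opprB.
rewrite e mulrN; have : a * ln (b / a) <= a * (b / a - 1) by rewrite ler_pM2l.
rewrite mulrBr mulr1 mulrCA divff ?mulr1 ?lt0r_neq0 //; lra.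
Qed.

Lemma dbin_ge0 (x z : R) : 0 <= x <= 1 -> 0 < z < 1 -> 0 <= dbin x z.
Proof.
move=> /andP[x0 x1] /andP[z0 z1].
have h1 := @plogq_gibbs x z x0 z0.
have h2 := @plogq_gibbs (1 - x) (1 - z) ltac:(lra) ltac:(lra).
rewrite /dbin; apply: le_trans (lerD h1 h2).
rewrite -mulrDl; have -> : x - z + (1 - x - (1 - z)) = 0 by ring.
by rewrite mul0r.
Qed.

Lemma rr_half (c : R) : rr c (1 / 2) = 1 / 2.
Proof. by rewrite /rr; field. Qed.

Section BISO.
Variable l : nat.
Variable W : bool -> 'I_(2 * l + 1) -> R.
Hypothesis hW : is_BISO W.

Definition mW y := W false y + W true y.
Definition cW y := (W true y - W false y) / mW y.
Definition KW := \sum_y (mW y / 2) * cW y ^+ 2.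

Lemma W_ge0 x y : 0 <= W x y.
Proof. by case: hW => hc _; case: (hc x) => h _; exact: h. Qed.

Lemma W_sum x : \sum_y W x y = 1.
Proof. by case: hW => hc _; case: (hc x). Qed.

Lemma W_sym y : W false y = W true (rev_ord y).
Proof. by case: hW. Qed.

Lemma mW_ge0 y : 0 <= mW y.
Proof. by rewrite /mW addr_ge0 ?W_ge0. Qed.

Lemma sum_w : \sum_y mW y / 2 = 1.
Proof.
by rewrite -mulr_suml /mW big_split /= !W_sum; field.
Qed.

Lemma cW_in y : -1 <= cW y <= 1.
Proof.
rewrite /cW /mW; have a0 := W_ge0 false y; have b0 := W_ge0 true y.
case: (eqVneq (W false y + W true y) 0) => [->|m0].
  by rewrite invr0 mulr0; lra.
have mp : 0 < W false y + W true y by rewrite lt_def m0 addr_ge0.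
set c := (W true y - W false y) / (W false y + W true y).
have hc : c * (W false y + W true y) = W true y - W false y by rewrite /c; field.
by apply/andP; split; nra.
Qed.

Lemma KW_le1 : KW <= 1.
Proof.
rewrite -sum_w /KW; apply: ler_sum => y _.
rewrite -[X in _ <= X]mulr1; apply: ler_wpM2l; first by rewrite divr_ge0 ?mW_ge0.
have := cW_in y => /andP[? ?]; rewrite expr2; nra.
Qed.

Lemma KW_ge0 : 0 <= KW.
Proof. by apply: sumr_ge0 => y _; rewrite mulr_ge0 ?sqr_ge0 ?divr_ge0 ?mW_ge0. Qed.

Lemma KL_W_decomp (p q : R) :
  KL (outd W (bd p)) (outd W (bd q)) = \sum_y (mW y / 2) * dbin (rr (cW y) p) (rr (cW y) q).
Proof.
have inv : involutive (@rev_ord (2 * l + 1)) := @rev_ordK _.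
have h1 : forall y, W true (rev_ord y) = W false y by move=> y; rewrite W_sym.
have h2 : forall y, W false (rev_ord y) = W true y by move=> y; rewrite W_sym rev_ordK.
rewrite /KL.
set F := fun y => plogq (outd W (bd p) y) (outd W (bd q) y).
have E : \sum_y F y = \sum_y F (rev_ord y) by rewrite (reindex_inj (inv_inj inv)).
transitivity ((\sum_y F y + \sum_y F (rev_ord y)) / 2).
  by rewrite -E; field.
rewrite -big_split mulr_suml; apply: eq_bigr => y _ /=.
rewrite /F !outdE h1 h2 /bd /=.
rewrite (@term_decomp (W false y) (W true y) p q (W_ge0 _ _) (W_ge0 _ _)) /cW /mW.
by field.
Qed.

Lemma sdpi_W (p q : R) : 0 <= p <= 1 -> 0 <= q <= 1 -> (0 < q < 1 \/ p = q) ->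
  KL (outd W (bd p)) (outd W (bd q)) <= KW * dbin p q.
Proof.
move=> hp hq hpq; rewrite KL_W_decomp /KW mulr_suml; apply: ler_sum => y _.
rewrite -[X in _ <= X]mulrA; apply: ler_wpM2l; first by rewrite divr_ge0 ?mW_ge0.
exact: sdpi_bsc (cW_in y) hp hq hpq.
Qed.

Lemma KL_W_ge0 (p : R) : 0 <= p <= 1 -> 0 <= KL (outd W (bd p)) (outd W unif).
Proof.
move=> hp; rewrite unif_bd KL_W_decomp; apply: sumr_ge0 => y _.
apply: mulr_ge0; first by rewrite divr_ge0 ?mW_ge0.
rewrite rr_half; apply: dbin_ge0; first exact: rr_in (cW_in y) hp.
apply/andP; split; lra.
Qed.
Lemma dbin_1half : dbin (1 : R) (1 / 2) = 1.
Proof.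
rewrite /dbin subrr plogq0 addr0 /plogq oner_eq0 mul1r /log2.
have -> : 1 / (1 / 2) = (2 : R) by field.
by rewrite divff // ln2_neq0.
Qed.

Lemma eta_mem (P Q : bool -> R) : is_distr P -> is_distr Q -> abs_cont P Q -> 0 < KL P Q ->
  (fun r => exists P Q : bool -> R, [/\ is_distr P, is_distr Q, abs_cont P Q, 0 < KL P Q &
            r = KL (outd W P) (outd W Q) / KL P Q]) (KL (outd W P) (outd W Q) / KL P Q).
Proof. by move=> *; exists P, Q; split. Qed.

Lemma eta_ub : ubound [set r : R | exists P Q : bool -> R,
        [/\ is_distr P, is_distr Q, abs_cont P Q, 0 < KL P Q &
            r = KL (outd W P) (outd W Q) / KL P Q]] KW.
Proof.
move=> r [P [Q [hP hQ hPQ hK ->]]].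
rewrite (distr_bd hP) (distr_bd hQ) KL_bd in hK *.
have hp := bd_in hP; have hq := bd_in hQ.
rewrite ler_pdivrMr // sdpi_W //.
case/andP: hq => q0 q1.
case: (ltgtP (Q true) 0) => [|qp|q0'].
- lra.
- case: (ltgtP (Q true) 1) => [q1'|q1'|q1'].
  + by left; apply/andP.
  + lra.
  + right; rewrite q1'.
    have : Q false = 0 by have := distr_sum hQ; lra.
    move/hPQ; have := distr_sum hP; lra.
- by right; rewrite q0'; apply: hPQ.
Qed.
Definition etaS := [set r : R | exists P Q : bool -> R,
        [/\ is_distr P, is_distr Q, abs_cont P Q, 0 < KL P Q &
            r = KL (outd W P) (outd W Q) / KL P Q]].

Lemma etaE : etaKL W = sup etaS.
Proof. by []. Qed.

Lemma bd1_distr : is_distr (bd (1 : R)).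
Proof. by apply: is_distr_bd; apply/andP; split; lra. Qed.

Lemma KL_bd1 : KL (bd (1 : R)) unif = 1.
Proof. by rewrite unif_bd KL_bd dbin_1half. Qed.

Lemma eta_wit : etaS (KL (outd W (bd 1)) (outd W unif) / KL (bd 1) unif).
Proof.
exists (bd 1), unif; split => //.
- exact: bd1_distr.
- exact: is_distr_unif.
- by move=> t; rewrite /unif => h; exfalso; move: h; lra.
- by rewrite KL_bd1 ltr01.
Qed.

Lemma eta_le_K : etaKL W <= KW.
Proof. rewrite etaE; apply: ge_sup; [by exists (KL (outd W (bd 1)) (outd W unif) / KL (bd 1) unif); exact: eta_wit | exact: eta_ub]. Qed.

Lemma eta_hasub : has_ubound etaS.
Proof. by exists KW; exact: eta_ub. Qed.

Lemma eta_ge0 : 0 <= etaKL W.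
Proof.
rewrite etaE; apply: le_trans (ub_le_sup eta_hasub eta_wit).
rewrite KL_bd1 divr1; apply: KL_W_ge0; apply/andP; split; lra.
Qed.

Lemma eta_le1 : etaKL W <= 1.
Proof. exact: le_trans eta_le_K KW_le1. Qed.

Lemma eta_ratio (p : R) : 0 <= p <= 1 ->
  KL (outd W (bd p)) (outd W unif) <= etaKL W * dbin p (1 / 2).
Proof.
move=> hp.
have hd : 0 <= dbin p (1 / 2) by apply: dbin_ge0 => //; apply/andP; split; lra.
case: (ltrP 0 (dbin p (1 / 2))) => hd0.
  have hm : etaS (KL (outd W (bd p)) (outd W unif) / KL (bd p) unif).
    exists (bd p), unif; split => //.
    - exact: is_distr_bd.
    - exact: is_distr_unif.
    - by move=> t; rewrite /unif => h; exfalso; move: h; lra.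
    - by rewrite unif_bd KL_bd.
  have := ub_le_sup eta_hasub hm; rewrite -etaE unif_bd KL_bd.
  by rewrite ler_pdivrMr.
have -> : dbin p (1 / 2) = 0 by apply/le_anti/andP.
rewrite mulr0; have := @sdpi_W p (1 / 2) hp.
rewrite -unif_bd; have -> : dbin p (1 / 2) = 0 by apply/le_anti/andP.
rewrite mulr0; apply.
- by apply/andP; split; lra.
- by left; apply/andP; split; lra.
Qed.
Lemma W_inv : involutive (@rev_ord (2 * l + 1)).
Proof. exact: rev_ordK. Qed.

Lemma MI_W_decomp (P : bool -> R) : is_distr P ->
  MI unif W = MI P W + KL (outd W P) (outd W unif).
Proof. by move=> hP; apply: (MI_unif_decomp W_inv W_sym W_ge0 hP). Qed.

Lemma half_half : 1 - 1 / 2 = (1 / 2 : R).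
Proof. by field. Qed.

Lemma dbin_half (x : R) : 0 <= x <= 1 -> dbin x (1 / 2) = GG (2 * x - 1) / (2 * ln 2).
Proof.
case/andP=> x0 x1.
have key : forall a : R, plogq a (1 / 2) = a * ln (2 * a) / ln 2.
  move=> a; rewrite /plogq /log2; case: eqP => [->|_]; first by rewrite !mul0r.
  have -> : a / (1 / 2) = 2 * a by field.
  by rewrite mulrA.
rewrite /dbin half_half !key /GG.
have -> : 1 + (2 * x - 1) = 2 * x by ring.
have -> : 1 - (2 * x - 1) = 2 * (1 - x) by ring.
by field; exact: ln2_neq0.
Qed.

Lemma KL_W_GG (p : R) : 0 <= p <= 1 -> KL (outd W (bd p)) (outd W unif) =
  \sum_y (mW y / 2) * (GG (cW y * (2 * p - 1)) / (2 * ln 2)).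
Proof.
move=> hp; rewrite unif_bd KL_W_decomp; apply: eq_bigr => y _.
rewrite rr_half dbin_half; last exact: rr_in (cW_in y) hp.
by congr (_ * (GG _ / _)); rewrite /rr; field.
Qed.

Lemma capacity_W : capacity W = MI unif W.
Proof.
rewrite /capacity; apply/le_anti/andP; split.
  apply: ge_sup; first by exists (MI unif W); exists unif => //; exact: is_distr_unif.
  move=> r [P hP <-]; rewrite (MI_W_decomp hP) lerDl (distr_bd hP).
  exact: KL_W_ge0 (bd_in hP).
apply: ub_le_sup; last by exists unif => //; exact: is_distr_unif.
exists (MI unif W) => r [P hP <-]; rewrite (MI_W_decomp hP) lerDl (distr_bd hP).
exact: KL_W_ge0 (bd_in hP).
Qed.
End BISO.
Lemma sum_optb (F : option bool -> R) :
  \sum_(o : option bool) F o = F None + (F (Some true) + F (Some false)).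
Proof.
rewrite (bigD1 None) //=; congr (_ + _).
rewrite (reindex_onto Some (fun o => if o is Some b then b else true)) /=.
  by rewrite (eq_bigl xpredT) ?big_bool // => j; rewrite eqxx.
by case => //.
Qed.

Definition onegb (o : option bool) := if o is Some b then Some (~~ b) else None.

Lemma onegb_inv : involutive onegb.
Proof. by case => [[]|]. Qed.

Lemma BEC_sym (e : R) y : BEC e false y = BEC e true (onegb y).
Proof. by case: y => [[]|]. Qed.

Lemma BEC_ge0 (e : R) : 0 <= e <= 1 -> forall x y, 0 <= BEC e x y.
Proof. by case/andP=> e0 e1 [] [[]|] /=; rewrite ?subr_ge0. Qed.

Lemma MI_unif_BEC (e : R) : 0 <= e <= 1 -> MI unif (BEC e) = 1 - e.
Proof.
move=> he; rewrite (MI_sym onegb_inv (@BEC_sym e) (BEC_ge0 he) is_distr_unif).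
rewrite /Hn !sum_optb !outdE /BEC /unif /=.
have -> : 1 / 2 * e + 1 / 2 * e = e by field.
have -> : 1 / 2 * (1 - e) + 1 / 2 * 0 = (1 - e) / 2 by field.
have -> : 1 / 2 * 0 + 1 / 2 * (1 - e) = (1 - e) / 2 by field.
rewrite !plogq1 mul0r mul0r.
case/andP: he => e0 e1.
case: (eqVneq (1 - e) 0) => [->|ne]; first by rewrite !mul0r; ring.
have ep : 0 < 1 - e by rewrite lt_def ne subr_ge0.
rewrite ln_div ?posrE //.
by field; exact: ln2_neq0.
Qed.

Lemma KL_BEC (e p : R) : 0 <= e <= 1 -> 0 <= p <= 1 ->
  KL (outd (BEC e) (bd p)) (outd (BEC e) unif) = (1 - e) * dbin p (1 / 2).
Proof.
case/andP=> e0 e1 hp.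
rewrite /KL sum_optb !outdE /BEC /unif /bd /=.
have -> : p * e + (1 - p) * e = 1 / 2 * e + 1 / 2 * e by field.
rewrite plogq_xx add0r.
have -> : p * (1 - e) + (1 - p) * 0 = (1 - e) * p by ring.
have -> : 1 / 2 * (1 - e) + 1 / 2 * 0 = (1 - e) * (1 / 2) by ring.
have -> : p * 0 + (1 - p) * (1 - e) = (1 - e) * (1 - p) by ring.
have -> : 1 / 2 * 0 + 1 / 2 * (1 - e) = (1 - e) * (1 / 2) by ring.
rewrite !plogq_scale ?subr_ge0 // /dbin half_half; ring.
Qed.

Lemma BSC_sym (d : R) y : BSC d false y = BSC d true (~~ y).
Proof. by case: y. Qed.

Lemma BSC_ge0 (d : R) : 0 <= d <= 1 -> forall x y, 0 <= BSC d x y.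
Proof. by case/andP=> d0 d1 [] [] /=; rewrite /BSC /= ?subr_ge0. Qed.

Lemma MI_unif_BSC (d : R) : 0 <= d <= 1 -> MI unif (BSC d) = 1 - h2 d.
Proof.
move=> hd; rewrite (MI_sym negbK (@BSC_sym d) (BSC_ge0 hd) is_distr_unif).
rewrite /Hn !big_bool !outdE /BSC /unif /h2 /=.
have -> : 1 / 2 * (1 - d) + 1 / 2 * d = 1 / 2 by field.
have -> : 1 / 2 * d + 1 / 2 * (1 - d) = 1 / 2 by field.
rewrite !plogq1 ln_div ?posrE // ln1 sub0r.
by field; exact: ln2_neq0.
Qed.

Lemma KL_BSC (d p : R) : KL (outd (BSC d) (bd p)) (outd (BSC d) unif) = dbin (rr (1 - 2 * d) p) (1 / 2).
Proof.
rewrite /KL big_bool !outdE /BSC /unif /bd /dbin /=.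
have -> : p * (1 - d) + (1 - p) * d = rr (1 - 2 * d) p by rewrite /rr; field.
have -> : 1 / 2 * (1 - d) + 1 / 2 * d = 1 / 2 by field.
have -> : p * d + (1 - p) * (1 - d) = 1 - rr (1 - 2 * d) p by rewrite /rr; field.
have -> : 1 / 2 * d + 1 / 2 * (1 - d) = 1 - 1 / 2 by field.
by [].
Qed.

Lemma GG_even (x : R) : GG (- x) = GG x.
Proof. by rewrite /GG opprK addrC. Qed.

Lemma sup_max (S : set (bool -> R)) (f : (bool -> R) -> R) (P0 : bool -> R) :
  S P0 -> (forall P, S P -> f P <= f P0) -> sup [set f P | P in S] = f P0.
Proof.
move=> h0 hm; apply/le_anti/andP; split.
  apply: ge_sup; first by exists (f P0); exists P0.
  by move=> r [P hP <-]; apply: hm.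
apply: ub_le_sup; last by exists P0.
by exists (f P0) => r [P hP <-]; apply: hm.
Qed.
Lemma BSC_le_W l (W : bool -> 'I_(2 * l + 1) -> R) (hW : is_BISO W) (s p : R) :
  0 <= s <= 1 -> s ^+ 2 <= KW W -> 0 <= p <= 1 ->
  dbin (rr s p) (1 / 2) <= KL (outd W (bd p)) (outd W unif).
Proof.
move=> hs hK hp.
have hs' : -1 <= s <= 1 by case/andP: hs => ? ?; apply/andP; split; lra.
rewrite (KL_W_GG hW hp) dbin_half; last exact: rr_in hs' hp.
have -> : 2 * rr s p - 1 = s * (2 * p - 1) by rewrite /rr; field.
rewrite (eq_bigr (fun y => (mW W y / 2 * GG (cW W y * (2 * p - 1))) / (2 * ln 2))); last first.
  by move=> y _; rewrite mulrA.
rewrite -mulr_suml ler_pM2r; last by rewrite invr_gt0 mulr_gt0 ?ln2_gt0.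
have hw : forall y, 0 <= mW W y / 2 by move=> y; rewrite divr_ge0 ?mW_ge0.
case: (lerP 0 (2 * p - 1)) => ht.
  apply: jensen_G => //.
  - exact: sum_w.
  - exact: cW_in.
  - by apply/andP; split => //; case/andP: hp => ? ?; lra.
rewrite (eq_bigr (fun y => mW W y / 2 * GG (cW W y * (1 - 2 * p)))); last first.
  by move=> y _; rewrite -GG_even -mulrN opprB.
rewrite -GG_even -mulrN opprB.
apply: jensen_G => //.
- exact: sum_w.
- exact: cW_in.
- by apply/andP; split; case/andP: hp => ? ?; lra.
Qed.
End Info.

Unset Implicit Arguments.

Theorem mainTheorem10 (R : realType) (l : nat) (W : bool -> 'I_(2 * l + 1) -> R) :
  (1 <= l)%N -> is_BISO W ->
  secrecy_capacity (BEC (1 - etaKL W)) W = etaKL W - capacity W /\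
  secrecy_capacity W (BSC ((1 - Num.sqrt (etaKL W)) / 2)) =
    capacity W - 1 + h2 ((1 - Num.sqrt (etaKL W)) / 2).
Proof.
move=> _ hW.
have e0 := eta_ge0 hW; have e1 := eta_le1 hW; have eK := eta_le_K hW.
rewrite (capacity_W hW); split.
- have he : 0 <= 1 - etaKL W <= 1 by apply/andP; split; lra.
  rewrite /secrecy_capacity (@sup_max R _ _ (@unif R)).
  + by rewrite (MI_unif_BEC he); ring.
  + exact: is_distr_unif.
  move=> P hP.
  rewrite (MI_unif_decomp onegb_inv (@BEC_sym _ (1 - etaKL W)) (BEC_ge0 he) hP) (MI_W_decomp hW hP).
  have hp := bd_in hP.
  rewrite (distr_bd hP) (KL_BEC he hp).
  have h := eta_ratio hW hp.
  have -> : 1 - (1 - etaKL W) = etaKL W by ring.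
  lra.
- set s := Num.sqrt (etaKL W).
  have s0 : 0 <= s by rewrite /s sqrtr_ge0.
  have s2 : s ^+ 2 = etaKL W by rewrite /s sqr_sqrtr.
  have s1 : s <= 1 by rewrite /s -sqrtr1 ler_sqrt.
  have hd : 0 <= (1 - s) / 2 <= 1 by apply/andP; split; lra.
  rewrite /secrecy_capacity (@sup_max R _ _ (@unif R)).
  + by rewrite (MI_unif_BSC hd); ring.
  + exact: is_distr_unif.
  move=> P hP.
  rewrite (MI_unif_decomp negbK (@BSC_sym _ ((1 - s) / 2)) (BSC_ge0 hd) hP) (MI_W_decomp hW hP).
  have hp := bd_in hP.
  rewrite (distr_bd hP) KL_BSC.
  have -> : 1 - 2 * ((1 - s) / 2) = s by field.
  have h := @BSC_le_W R l W hW s (P true) ltac:(by apply/andP) ltac:(by rewrite s2) hp.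
  lra.
Qed.
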